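(* Fix an amplification factor $\gamma \geq 1$ and a damping factor $0 \leq \rho < 1$. Let $A:\mathbb{R}^2\to\mathbb{R}^2$ be the linear map $A(u,v) = (u, u+v)$, let $\mathbf{1} = (1,1)$, $\mathbf{c} = (\gamma,1)$, $\mathbf{d} = (1,0)$, and define the piecewise affine map $T:\mathbb{R}^2\to\mathbb{R}^2$ by $$T\mathbf{x} = \begin{cases} A\mathbf{x} + \mathbf{1}, & \text{if } \langle \mathbf{c},\mathbf{x}\rangle \leq -1/2,\\ A\mathbf{x}, & \text{if } |\langle \mathbf{c},\mathbf{x}\rangle| < 1/2,\\ A\mathbf{x} - \mathbf{1}, & \text{if } \langle \mathbf{c},\mathbf{x}\rangle \geq 1/2,\end{cases}$$ and the asymmetrically-damped map $M:\mathbb{R}^2\to\mathbb{R}^2$ by $$M\mathbf{x} = \begin{cases} T(\rho\mathbf{x}), & \text{if } \langle \mathbf{d},\mathbf{x}\rangle \geq 0,\\ T\mathbf{x}, & \text{if } \langle \mathbf{d},\mathbf{x}\rangle < 0.\end{cases}$$ Then the origin is a globally attracting fixed point of $M$: $M\mathbf{0} = \mathbf{0}$, and for every $\mathbf{x}_0 \in \mathbb{R}^2$ the iterates $\mathbf{x}_n = M^n \mathbf{x}_0$ satisfy $\|\mathbf{x}_n\| \to 0$ as $n \to \infty$.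
   Context: $\langle\cdot,\cdot\rangle$ denotes the standard inner product on $\mathbb{R}^2$; points of $\mathbb{R}^2$ are written $\mathbf{x} = (u,v)$. *)

(* Defs.v *)
From Stdlib Require Import Reals.
Open Scope R_scope.

Definition inner (x y : R * R) : R := fst x * fst y + snd x * snd y.

Definition euclid_norm (x : R * R) : R := sqrt (fst x * fst x + snd x * snd x).

Definition vscale (r : R) (x : R * R) : R * R := (r * fst x, r * snd x).
Definition vadd (x y : R * R) : R * R := (fst x + fst y, snd x + snd y).
Definition vsub (x y : R * R) : R * R := (fst x - fst y, snd x - snd y).

Definition Amap (x : R * R) : R * R := (fst x, fst x + snd x).

Definition one2 : R * R := (1, 1).
Definition cvec (gamma : R) : R * R := (gamma, 1).
Definition dvec : R * R := (1, 0).

Definition Tmap (gamma : R) (x : R * R) : R * R :=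
  let s := inner (cvec gamma) x in
  if Rle_dec s (-(1/2)) then vadd (Amap x) one2
  else if Rlt_dec (Rabs s) (1/2) then Amap x
  else vsub (Amap x) one2.

Definition Mmap (gamma rho : R) (x : R * R) : R * R :=
  if Rle_dec 0 (inner dvec x) then Tmap gamma (vscale rho x)
  else Tmap gamma x.

Fixpoint iterM (gamma rho : R) (n : nat) (x : R * R) : R * R :=
  match n with
  | O => x
  | S k => Mmap gamma rho (iterM gamma rho k x)
  end.

(* Main.v *)
Require Import Defs.
From Stdlib Require Import Reals Lra Lia Psatz ZArith Classical.
Open Scope R_scope.

Definition sF (g:R) (x:R*R) := g * fst x + snd x.
Definition RF g x := sF g x + fst x * fst x / 2 - (g + 1/2) * fst x.
Definition NF g x := - sF g x + fst x * fst x / 2 + (g + 1/2) * fst x.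
Definition EF g x := Rmax (RF g x) (NF g x).
Definition inS g r x :=
  (0 <= fst x < 1 /\ -(1/2) < r * sF g x /\ sF g x <= g - 1/2 + fst x) \/
  (-1 <= fst x < 0 /\ -(1/2) - g <= sF g x < 1/2).

Lemma T_pos g u v : 1/2 <= g*u+v -> Tmap g (u,v) = (u-1, u+v-1).
Proof.
  intro H. unfold Tmap, inner, cvec; simpl.
  replace (g*u+1*v) with (g*u+v) by ring.
  destruct (Rle_dec (g*u+v) (-(1/2))); [lra|].
  destruct (Rlt_dec (Rabs (g*u+v)) (1/2)).
  - pose proof (Rle_abs (g*u+v)); lra.
  - unfold vsub, Amap, one2; simpl; reflexivity.
Qed.

Lemma T_zero g u v : -(1/2) < g*u+v < 1/2 -> Tmap g (u,v) = (u, u+v).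
Proof.
  intro H. unfold Tmap, inner, cvec; simpl.
  replace (g*u+1*v) with (g*u+v) by ring.
  destruct (Rle_dec (g*u+v) (-(1/2))); [lra|].
  destruct (Rlt_dec (Rabs (g*u+v)) (1/2)).
  - unfold Amap; reflexivity.
  - exfalso; apply n0. apply Rabs_def1; lra.
Qed.

Lemma T_neg g u v : g*u+v <= -(1/2) -> Tmap g (u,v) = (u+1, u+v+1).
Proof.
  intro H. unfold Tmap, inner, cvec; simpl.
  replace (g*u+1*v) with (g*u+v) by ring.
  destruct (Rle_dec (g*u+v) (-(1/2))); [|lra].
  unfold vadd, Amap, one2; simpl; reflexivity.
Qed.

Lemma M_pos g r u v : 0 <= u -> Mmap g r (u,v) = Tmap g (r*u, r*v).
Proof.
  intro H. unfold Mmap, inner, dvec, vscale; simpl.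
  destruct (Rle_dec 0 (1*u+0*v)); [reflexivity| lra].
Qed.

Lemma M_neg g r u v : u < 0 -> Mmap g r (u,v) = Tmap g (u,v).
Proof.
  intro H. unfold Mmap, inner, dvec, vscale; simpl.
  destruct (Rle_dec 0 (1*u+0*v)); [lra| reflexivity].
Qed.

Lemma iter_add g r k n x : iterM g r (k + n) x = iterM g r k (iterM g r n x).
Proof. induction k; simpl; [reflexivity| now rewrite IHk]. Qed.

Lemma iter_S' g r n x : iterM g r (S n) x = iterM g r n (Mmap g r x).
Proof.
  replace (S n) with (n + 1)%nat by lia. rewrite iter_add. reflexivity.
Qed.

Lemma key_T g r y : 1 <= g -> 0 <= r ->
  inS g r (Tmap g y) \/ EF g (Tmap g y) <= EF g y.
Proof.
  intros Hg Hr. destruct y as [u v].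
  unfold EF, inS, RF, NF, sF; simpl.
  destruct (Rle_dec (1/2) (g*u+v)) as [H1|H1].
  { rewrite T_pos by lra; simpl.
    destruct (Rle_dec (-(g*(u-1)+(u+v-1)) + (u-1)*(u-1)/2 + (g+1/2)*(u-1))
                      (Rmax (g*u+v+u*u/2-(g+1/2)*u) (-(g*u+v)+u*u/2+(g+1/2)*u))) as [H|H].
    - right. apply Rmax_lub; [|exact H].
      eapply Rle_trans; [|apply Rmax_l]. lra.
    - left. right. apply Rnot_le_lt in H.
      pose proof (Rmax_l (g*u+v+u*u/2-(g+1/2)*u) (-(g*u+v)+u*u/2+(g+1/2)*u)).
      pose proof (Rmax_r (g*u+v+u*u/2-(g+1/2)*u) (-(g*u+v)+u*u/2+(g+1/2)*u)).
      assert (0 < u) by nra. assert (u < 1/2) by nra. nra. }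
  destruct (Rle_dec (g*u+v) (-(1/2))) as [H2|H2].
  { rewrite T_neg by lra; simpl.
    destruct (Rle_dec (g*(u+1)+(u+v+1) + (u+1)*(u+1)/2 - (g+1/2)*(u+1))
                      (Rmax (g*u+v+u*u/2-(g+1/2)*u) (-(g*u+v)+u*u/2+(g+1/2)*u))) as [H|H].
    - right. apply Rmax_lub; [exact H|].
      eapply Rle_trans; [|apply Rmax_r]. lra.
    - left. left. apply Rnot_le_lt in H.
      pose proof (Rmax_l (g*u+v+u*u/2-(g+1/2)*u) (-(g*u+v)+u*u/2+(g+1/2)*u)).
      pose proof (Rmax_r (g*u+v+u*u/2-(g+1/2)*u) (-(g*u+v)+u*u/2+(g+1/2)*u)).
      assert (-(1/2) < u) by nra. assert (u < 0) by nra.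
      assert (0 < g*(u+1)+(u+v+1)) by nra.
      repeat split; nra. }
  rewrite T_zero by lra; simpl.
  destruct (Rle_dec (g*u+(u+v) + u*u/2 - (g+1/2)*u)
                    (Rmax (g*u+v+u*u/2-(g+1/2)*u) (-(g*u+v)+u*u/2+(g+1/2)*u))) as [H|H].
  - destruct (Rle_dec (-(g*u+(u+v)) + u*u/2 + (g+1/2)*u)
                    (Rmax (g*u+v+u*u/2-(g+1/2)*u) (-(g*u+v)+u*u/2+(g+1/2)*u))) as [H'|H'].
    + right. apply Rmax_lub; assumption.
    + left. right. apply Rnot_le_lt in H'.
      pose proof (Rmax_l (g*u+v+u*u/2-(g+1/2)*u) (-(g*u+v)+u*u/2+(g+1/2)*u)).
      pose proof (Rmax_r (g*u+v+u*u/2-(g+1/2)*u) (-(g*u+v)+u*u/2+(g+1/2)*u)).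
      assert (u < 0) by nra. assert (g*u+v < g*u) by nra.
      assert (-(1/2) < u) by nra. repeat split; nra.
  - left. left. apply Rnot_le_lt in H.
      pose proof (Rmax_l (g*u+v+u*u/2-(g+1/2)*u) (-(g*u+v)+u*u/2+(g+1/2)*u)).
      pose proof (Rmax_r (g*u+v+u*u/2-(g+1/2)*u) (-(g*u+v)+u*u/2+(g+1/2)*u)).
      assert (0 < u) by nra. assert (g*u+v > g*u) by nra.
      assert (u < 1/2) by nra.
      assert (0 <= r * (g*u+(u+v))) by (apply Rmult_le_pos; nra).
      repeat split; lra.
Qed.

Lemma EF_nonneg g x : 0 <= EF g x.
Proof.
  destruct x as [u v]. unfold EF, RF, NF, sF; simpl.
  pose proof (Rmax_l (g*u+v+u*u/2-(g+1/2)*u) (-(g*u+v)+u*u/2+(g+1/2)*u)).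
  pose proof (Rmax_r (g*u+v+u*u/2-(g+1/2)*u) (-(g*u+v)+u*u/2+(g+1/2)*u)).
  nra.
Qed.

Lemma EF_scale g r u v : 0 <= r <= 1 -> EF g (r*u, r*v) <= r * EF g (u,v).
Proof.
  intros Hr. unfold EF, RF, NF, sF; simpl.
  pose proof (Rmax_l (g*u+v+u*u/2-(g+1/2)*u) (-(g*u+v)+u*u/2+(g+1/2)*u)).
  pose proof (Rmax_r (g*u+v+u*u/2-(g+1/2)*u) (-(g*u+v)+u*u/2+(g+1/2)*u)).
  set (m := Rmax _ _) in *.
  assert (0 <= r*(1-r)*(u*u)) by (apply Rmult_le_pos; [nra| nra]).
  apply Rmax_lub; nra.
Qed.

Lemma key_M g r x : 1 <= g -> 0 <= r <= 1 ->
  inS g r (Mmap g r x) \/ EF g (Mmap g r x) <= (if Rle_dec 0 (fst x) then r else 1) * EF g x.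
Proof.
  intros Hg Hr. destruct x as [u v]; simpl.
  destruct (Rle_dec 0 u) as [Hu|Hu].
  - rewrite M_pos by lra.
    destruct (key_T g r (r*u, r*v) Hg (proj1 Hr)) as [H|H]; [now left|right].
    eapply Rle_trans; [exact H|]. apply EF_scale; lra.
  - rewrite M_neg by lra.
    destruct (key_T g r (u, v) Hg (proj1 Hr)) as [H|H]; [now left|right]. lra.
Qed.

Lemma inS_inv g r x : 1 <= g -> 0 <= r < 1 -> inS g r x -> inS g r (Mmap g r x).
Proof.
  intros Hg Hr HS. destruct x as [u v]. unfold inS, sF in *; simpl in *.
  destruct HS as [[Hu [Hs1 Hs2]]|[Hu Hs]].
  - rewrite M_pos by lra.
    destruct (Rle_dec (1/2) (g*(r*u)+r*v)) as [H1|H1].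
    + rewrite T_pos by lra; simpl. right.
      assert (0 <= r*u) by nra. assert (r*u < 1) by nra.
      assert (r*(g*u+v) <= r*(g - 1/2 + u)) by (apply Rmult_le_compat_l; lra).
      assert (r*(g+3/2) < g + 3/2) by nra.
      repeat split; nra.
    + rewrite T_zero by nra; simpl. left.
      assert (0 <= r*u) by nra. assert (r*u < 1) by nra.
      assert (-(1/2) < r*(r*(g*u+v))) by nra.
      repeat split; nra.
  - rewrite M_neg by lra.
    destruct (Rle_dec (g*u+v) (-(1/2))) as [H2|H2].
    + rewrite T_neg by lra; simpl. left.
      assert (-(1/2) <= g*(u+1)+(u+v+1)) by nra.
      assert (-(1/2) < r*(g*(u+1)+(u+v+1))) by nra.
      repeat split; nra.
    + rewrite T_zero by lra; simpl. right. repeat split; nra.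
Qed.

Lemma nat_large y : exists k:nat, y < INR k.
Proof.
  destruct (archimed (Rabs y)) as [H1 H2].
  pose proof (Rle_abs y). pose proof (Rabs_pos y).
  assert (0 < up (Rabs y))%Z by (apply lt_IZR; simpl; lra).
  exists (Z.to_nat (up (Rabs y))). rewrite INR_IZR_INZ, Z2Nat.id by lia. lra.
Qed.

Lemma residue_gap c : exists d, 0 < d /\ forall z:Z, c + IZR z < 0 -> c + IZR z <= -d.
Proof.
  destruct (archimed (-c)) as [H1 H2]. set (m := up (-c)) in *.
  destruct (Rlt_dec (c + IZR m - 1) 0) as [Hc|Hc].
  - exists (Rmin 1 (-(c + IZR m - 1))). split.
    + apply Rmin_glb_lt; lra.
    + intros z Hz. assert (z < m)%Z by (apply lt_IZR; lra).
      destruct (Z.eq_dec z (m-1)) as [->|Hne].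
      * rewrite minus_IZR. pose proof (Rmin_r 1 (-(c + IZR m - 1))). simpl in *. lra.
      * assert (z <= m - 2)%Z by lia. apply IZR_le in H0. rewrite minus_IZR in H0.
        pose proof (Rmin_l 1 (-(c + IZR m - 1))). simpl in *. lra.
  - exists 1. split; [lra|]. intros z Hz. assert (z < m)%Z by (apply lt_IZR; lra).
    destruct (Z.eq_dec z (m-1)) as [->|Hne].
    + rewrite minus_IZR in Hz. simpl in Hz. lra.
    + assert (z <= m - 2)%Z by lia. apply IZR_le in H0. rewrite minus_IZR in H0. simpl in *. lra.
Qed.

Lemma U_step g r u v : u < 0 ->
  (fst (Mmap g r (u,v)) = u - 1 \/ fst (Mmap g r (u,v)) = u \/ fst (Mmap g r (u,v)) = u + 1) /\
  snd (Mmap g r (u,v)) - fst (Mmap g r (u,v)) = v.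
Proof.
  intro Hu. rewrite M_neg by lra.
  destruct (Rle_dec (1/2) (g*u+v)).
  - rewrite T_pos by lra; simpl. split; [left; ring| ring].
  - destruct (Rle_dec (g*u+v) (-(1/2))).
    + rewrite T_neg by lra; simpl. split; [right; right; ring| ring].
    + rewrite T_zero by lra; simpl. split; [right; left; ring| ring].
Qed.

Lemma phi_lower g x : 1 <= g -> snd x - fst x >= -(3/2) * EF g x - 1/4.
Proof.
  intro Hg. destruct x as [u v]. unfold EF, RF, NF, sF; simpl.
  pose proof (Rmax_l (g*u+v+u*u/2-(g+1/2)*u) (-(g*u+v)+u*u/2+(g+1/2)*u)).
  pose proof (Rmax_r (g*u+v+u*u/2-(g+1/2)*u) (-(g*u+v)+u*u/2+(g+1/2)*u)).
  nra.
Qed.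


Lemma norm_le u v : euclid_norm (u,v) <= Rabs u + Rabs v.
Proof.
  unfold euclid_norm; simpl.
  pose proof (Rabs_pos u). pose proof (Rabs_pos v).
  rewrite <- (sqrt_Rsqr (Rabs u + Rabs v)) by lra.
  apply sqrt_le_1_alt.
  pose proof (Rsqr_abs u). pose proof (Rsqr_abs v). unfold Rsqr in *. nra.
Qed.

Lemma small_E g x eps : 1 <= g -> 0 < eps -> EF g x < Rmin (eps/4) (eps*eps/8) ->
  euclid_norm x < eps.
Proof.
  intros Hg He HE. destruct x as [u v].
  pose proof (Rmin_l (eps/4) (eps*eps/8)). pose proof (Rmin_r (eps/4) (eps*eps/8)).
  assert (HR : RF g (u,v) <= EF g (u,v)) by apply Rmax_l.
  assert (HN : NF g (u,v) <= EF g (u,v)) by apply Rmax_r.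
  unfold RF, NF, sF in HR, HN; simpl in HR, HN.
  set (E := EF g (u,v)) in *.
  assert (Hu2 : u*u <= 2*E) by nra.
  assert (Hu : Rabs u < eps/2).
  { destruct (Rlt_dec (Rabs u) (eps/2)) as [h|h]; [exact h|].
    exfalso. pose proof (Rsqr_abs u). unfold Rsqr in *. nra. }
  assert (Hv : Rabs v <= E + Rabs u / 2).
  { pose proof (Rle_abs u). pose proof (Rle_abs (-u)). rewrite Rabs_Ropp in *.
    apply Rabs_le. split; nra. }
  pose proof (norm_le u v). lra.
Qed.

Lemma B_step g r x0 : 1 <= g -> 0 <= r <= 1 -> (forall n, ~ inS g r (iterM g r n x0)) ->
  forall n, EF g (iterM g r (S n) x0) <= EF g (iterM g r n x0) /\
   (0 <= fst (iterM g r n x0) -> EF g (iterM g r (S n) x0) <= r * EF g (iterM g r n x0)).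
Proof.
  intros Hg Hr NS n. simpl.
  destruct (key_M g r (iterM g r n x0) Hg Hr) as [H|H].
  - exfalso. apply (NS (S n)). exact H.
  - pose proof (EF_nonneg g (iterM g r n x0)).
    destruct (Rle_dec 0 (fst (iterM g r n x0))).
    + split; [nra| intros; exact H].
    + split; [lra| intros; lra].
Qed.

Lemma B_mono g r x0 : 1 <= g -> 0 <= r <= 1 -> (forall n, ~ inS g r (iterM g r n x0)) ->
  forall k n, EF g (iterM g r (k + n) x0) <= EF g (iterM g r n x0).
Proof.
  intros Hg Hr NS k n. induction k.
  - simpl; lra.
  - eapply Rle_trans; [exact (proj1 (B_step g r x0 Hg Hr NS (k+n)))|exact IHk].
Qed.

Lemma B_Urun g r x0 : 1 <= g -> 0 <= r <= 1 -> (forall n, ~ inS g r (iterM g r n x0)) ->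
  forall N, exists n, (N <= n)%nat /\ 0 <= fst (iterM g r n x0).
Proof.
  intros Hg Hr NS N.
  destruct (classic (exists n, (N <= n)%nat /\ 0 <= fst (iterM g r n x0))) as [H|H]; [exact H|].
  exfalso.
  assert (Hneg : forall k, fst (iterM g r (k + N) x0) < 0).
  { intro k. destruct (Rlt_dec (fst (iterM g r (k + N) x0)) 0) as [h|h]; [exact h|].
    exfalso. apply H. exists (k+N)%nat. split; [lia|lra]. }
  set (c := fst (iterM g r N x0)).
  assert (Hint : forall k, exists z, fst (iterM g r (k + N) x0) = c + IZR z).
  { induction k.
    - exists 0%Z. simpl. unfold c. ring.
    - destruct IHk as [z Hz]. specialize (Hneg k).
      change (S k + N)%nat with (S (k + N)). simpl.
      destruct (iterM g r (k + N) x0) as [u v] eqn:E. simpl in Hz, Hneg.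
      destruct (U_step g r u v Hneg) as [[h|[h|h]] _]; rewrite h.
      + exists (z - 1)%Z. rewrite minus_IZR. simpl. lra.
      + exists z. lra.
      + exists (z + 1)%Z. rewrite plus_IZR. simpl. lra. }
  destruct (residue_gap c) as [d [Hd Hgap]].
  assert (Hle : forall k, fst (iterM g r (k + N) x0) <= - d).
  { intro k. destruct (Hint k) as [z Hz]. rewrite Hz. apply Hgap. rewrite <- Hz. apply Hneg. }
  set (P := fun n => snd (iterM g r n x0) - fst (iterM g r n x0)).
  assert (HP : forall k, P (k + N)%nat <= P N - INR k * d).
  { induction k.
    - simpl. lra.
    - unfold P in *. rewrite S_INR. change (S k + N)%nat with (S (k + N)).
      change (iterM g r (S (k + N)) x0) with (Mmap g r (iterM g r (k + N) x0)).
      pose proof (Hle k). pose proof (Hneg k).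
      destruct (iterM g r (k + N) x0) as [u v] eqn:E. simpl fst in *. simpl snd in *.
      destruct (U_step g r u v H1) as [_ h]. rewrite h. nra. }
  destruct (nat_large ((P N + (3/2) * EF g (iterM g r N x0) + 1/4) / d)) as [k Hk].
  pose proof (HP k).
  pose proof (phi_lower g (iterM g r (k + N) x0) Hg).
  pose proof (B_mono g r x0 Hg Hr NS k N).
  unfold P in *.
  apply (Rmult_lt_compat_r d) in Hk; [|exact Hd].
  unfold Rdiv in Hk. rewrite Rmult_assoc, Rinv_l in Hk by lra. lra.
Qed.

Lemma B_decay g r x0 : 1 <= g -> 0 <= r <= 1 -> (forall n, ~ inS g r (iterM g r n x0)) ->
  forall k, exists N, forall n, (N <= n)%nat -> EF g (iterM g r n x0) <= r ^ k * EF g x0.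
Proof.
  intros Hg Hr NS k. induction k.
  - exists 0%nat. intros n _. simpl. replace n with (n + 0)%nat by lia.
    pose proof (B_mono g r x0 Hg Hr NS n 0). simpl in *. lra.
  - destruct IHk as [N HN]. destruct (B_Urun g r x0 Hg Hr NS N) as [n1 [Hn1 Hu]].
    exists (S n1). intros n Hn.
    replace n with ((n - S n1) + S n1)%nat by lia.
    pose proof (B_mono g r x0 Hg Hr NS (n - S n1) (S n1)).
    pose proof (proj2 (B_step g r x0 Hg Hr NS n1) Hu).
    pose proof (HN n1 Hn1).
    simpl. assert (r * EF g (iterM g r n1 x0) <= r * (r^k * EF g x0)) by (apply Rmult_le_compat_l; lra).
    lra.
Qed.

Lemma branchB g r x0 : 1 <= g -> 0 <= r < 1 -> (forall n, ~ inS g r (iterM g r n x0)) ->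
  Un_cv (fun n => euclid_norm (iterM g r n x0)) 0.
Proof.
  intros Hg Hr NS eps He.
  set (dl := Rmin (eps/4) (eps*eps/8)).
  assert (Hdl : 0 < dl) by (apply Rmin_glb_lt; nra).
  pose proof (EF_nonneg g x0).
  destruct (pow_lt_1_zero r ltac:(rewrite Rabs_right; lra) (dl / (EF g x0 + 1)))
    as [k Hk].
  { apply Rdiv_lt_0_compat; lra. }
  destruct (B_decay g r x0 Hg ltac:(lra) NS k) as [N HN].
  exists N. intros n Hn. unfold R_dist. rewrite Rminus_0_r.
  rewrite Rabs_right by (apply Rle_ge, sqrt_pos).
  apply small_E with g; [exact Hg|exact He|].
  specialize (HN n Hn). specialize (Hk k (Nat.le_refl k)).
  rewrite Rabs_right in Hk by (apply Rle_ge, pow_le; lra).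
  fold dl.
  assert (r ^ k * EF g x0 <= r^k * (EF g x0 + 1)) by (apply Rmult_le_compat_l; [apply pow_le|]; lra).
  assert (r^k * (EF g x0 + 1) < dl).
  { apply (Rmult_lt_compat_r (EF g x0 + 1)) in Hk; [|lra].
    unfold Rdiv in Hk. rewrite Rmult_assoc, Rinv_l in Hk by lra. lra. }
  lra.
Qed.

Definition res (x : R*R) := if Rle_dec 0 (fst x) then fst x else fst x + 1.

Lemma Urun_N g r : 1 <= g -> 0 <= r < 1 -> forall N x, inS g r x -> fst x < 0 ->
  sF g x < -(1/2) + INR N * (- fst x) ->
  exists k, inS g r (iterM g r k x) /\ 0 <= fst (iterM g r k x) /\
    fst (iterM g r k x) = fst x + 1 /\ sF g (iterM g r k x) <= sF g x + fst x + g + 1.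
Proof.
  intros Hg Hr N. induction N; intros [u v] HS Hu Hs; simpl fst in *.
  - exists 1%nat. simpl iterM.
    assert (HS' := inS_inv g r (u,v) Hg Hr HS).
    unfold sF in *; simpl in *. rewrite M_neg in * by lra.
    rewrite T_neg in * by lra. simpl in *. split; [exact HS'|].
    destruct HS as [[h _]|[h _]]; simpl in h; [lra|]. repeat split; lra.
  - assert (HS' := inS_inv g r (u,v) Hg Hr HS).
    destruct HS as [[h _]|[h hs]]; simpl in h; [lra|]. unfold sF in hs; simpl in hs.
    destruct (Rle_dec (g*u+v) (-(1/2))) as [H1|H1].
    + exists 1%nat. simpl iterM. unfold sF in *; simpl in *. rewrite M_neg in * by lra.
      rewrite T_neg in * by lra. simpl in *. split; [exact HS'|]. repeat split; lra.
    + rewrite M_neg in HS' by lra. rewrite T_zero in HS' by lra.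
      rewrite S_INR in Hs.
      destruct (IHN (u, u+v) HS' ltac:(simpl; lra) ltac:(unfold sF in *; simpl in *; nra))
        as [k [Hk1 [Hk2 [Hk3 Hk4]]]].
      exists (S k). rewrite iter_S'. rewrite M_neg by lra. rewrite T_zero by lra.
      simpl fst in *. unfold sF in *; simpl in *. repeat split; try lra.
      exact Hk1.
Qed.

Lemma Urun g r x : 1 <= g -> 0 <= r < 1 -> inS g r x -> fst x < 0 ->
  exists k, inS g r (iterM g r k x) /\ 0 <= fst (iterM g r k x) /\
    fst (iterM g r k x) = fst x + 1 /\ sF g (iterM g r k x) <= sF g x + fst x + g + 1.
Proof.
  intros Hg Hr HS Hu.
  destruct (nat_large ((sF g x + 1/2) / (- fst x))) as [N HN].
  apply (Urun_N g r Hg Hr N x HS Hu).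
  apply (Rmult_lt_compat_r (- fst x)) in HN; [|lra].
  unfold Rdiv in HN. rewrite Rmult_assoc, Rinv_l in HN by lra. lra.
Qed.

Lemma D_step g r u v : 0 <= u -> 0 <= r ->
  (1/2 <= r*(g*u+v) -> Mmap g r (u,v) = (r*u-1, r*u+r*v-1)) /\
  (-(1/2) < r*(g*u+v) < 1/2 -> Mmap g r (u,v) = (r*u, r*u+r*v)).
Proof.
  intros Hu Hr. rewrite M_pos by lra. split; intro H.
  - rewrite T_pos by nra. reflexivity.
  - rewrite T_zero by nra. reflexivity.
Qed.

(* from an S* D-state, one step then possibly a U-run gives a D-state with u' = r u *)
Lemma D_next g r x : 1 <= g -> 0 <= r < 1 -> inS g r x -> 0 <= fst x ->
  exists k, inS g r (iterM g r k x) /\ 0 <= fst (iterM g r k x) /\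
    fst (iterM g r k x) = r * fst x.
Proof.
  intros Hg Hr HS Hu. destruct x as [u v]. simpl in Hu.
  assert (HS' := inS_inv g r (u,v) Hg Hr HS).
  destruct HS as [[h [h1 h2]]|[h _]]; simpl in h; [|lra]. unfold sF in h1; simpl in h1.
  destruct (Rle_dec (1/2) (r*(g*u+v))) as [H|H].
  - rewrite (proj1 (D_step g r u v Hu ltac:(lra)) H) in HS'.
    destruct (Urun g r _ Hg Hr HS' ltac:(simpl; nra)) as [k [Hk1 [Hk2 [Hk3 _]]]].
    exists (S k). rewrite iter_S'. rewrite (proj1 (D_step g r u v Hu ltac:(lra)) H).
    repeat split; try assumption. rewrite Hk3. simpl. ring.
  - exists 1%nat. simpl iterM.
    rewrite (proj2 (D_step g r u v Hu ltac:(lra)) ltac:(lra)) in *. simpl.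
    repeat split; try assumption; nra.
Qed.

Lemma res_decay g r : 1 <= g -> 0 <= r < 1 -> forall k x, inS g r x ->
  exists n, inS g r (iterM g r n x) /\ 0 <= fst (iterM g r n x) /\
    fst (iterM g r n x) <= r ^ k * res x.
Proof.
  intros Hg Hr k. induction k; intros x HS.
  - unfold res. destruct (Rle_dec 0 (fst x)) as [H|H].
    + exists 0%nat. simpl. repeat split; try assumption; lra.
    + destruct (Urun g r x Hg Hr HS ltac:(lra)) as [k [Hk1 [Hk2 [Hk3 _]]]].
      exists k. repeat split; try assumption. simpl. lra.
  - destruct (IHk x HS) as [n [Hn1 [Hn2 Hn3]]].
    destruct (D_next g r _ Hg Hr Hn1 Hn2) as [k' [H1 [H2 H3]]].
    exists (k' + n)%nat. rewrite iter_add. repeat split; try assumption.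
    rewrite H3. simpl. rewrite Rmult_assoc. apply Rmult_le_compat_l; lra.
Qed.

Definition Good g r x := inS g r x /\ 0 <= fst x /\ fst x <= (1 - r)/4 /\ r * sF g x < 1/2.

Lemma kick g r : 1 <= g -> 0 <= r < 1 -> forall N x, inS g r x -> 0 <= fst x -> fst x <= (1-r)/4 ->
  sF g x <= INR N / 2 -> exists k, Good g r (iterM g r k x).
Proof.
  intros Hg Hr N. induction N; intros [u v] HS Hu Hue Hs; simpl fst in *.
  - exists 0%nat. simpl. unfold Good. simpl in Hs. repeat split; try assumption.
    unfold sF in *; simpl in *. nra.
  - destruct (Rlt_dec (r * sF g (u,v)) (1/2)) as [H|H].
    { exists 0%nat. simpl. unfold Good. repeat split; assumption. }
    assert (HS' := inS_inv g r (u,v) Hg Hr HS).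
    unfold sF in H; simpl in H.
    rewrite (proj1 (D_step g r u v Hu ltac:(lra)) ltac:(lra)) in HS'.
    destruct (Urun g r _ Hg Hr HS' ltac:(simpl; nra)) as [k [Hk1 [Hk2 [Hk3 Hk4]]]].
    simpl fst in Hk3, Hk4. unfold sF at 2 in Hk4. simpl in Hk4.
    rewrite S_INR in Hs. unfold sF in Hs; simpl in Hs.
    assert (0 < g*u+v) by nra.
    assert (r*(g*u+v) <= g*u+v) by nra.
    destruct (IHN _ Hk1 Hk2 ltac:(rewrite Hk3; nra) ltac:(nra)) as [k' Hk'].
    exists (k' + (k + 1))%nat. rewrite !iter_add. simpl iterM at 2.
    rewrite (proj1 (D_step g r u v Hu ltac:(lra)) ltac:(lra)). exact Hk'.
Qed.

Definition W g r (x : R*R) := (1 - r) * Rabs (sF g x) + 2 * fst x.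

Lemma good_step g r x : 1 <= g -> 0 <= r < 1 -> Good g r x ->
  Good g r (Mmap g r x) /\ W g r (Mmap g r x) <= (1 + r)/2 * W g r x.
Proof.
  intros Hg Hr HG. assert (HS' := inS_inv g r x Hg Hr (proj1 HG)).
  destruct x as [u v]. destruct HG as [HS [Hu [Hue Hs]]]. simpl fst in *.
  assert (Hs2 : -(1/2) < r * sF g (u,v)) by (destruct HS as [[_ [h _]]|[h _]]; simpl in h; [exact h|lra]).
  unfold sF in *; simpl in *.
  rewrite (proj2 (D_step g r u v Hu ltac:(lra)) ltac:(lra)) in *.
  unfold Good, W, sF; simpl. split.
  - repeat split; try assumption; try nra.
    replace (r * (g * (r * u) + (r * u + r * v))) with (r * (r*(g*u+v)) + r*r*u) by ring.
    assert (r*r <= 1) by nra. assert (0 <= (1 - r*r)*u) by (apply Rmult_le_pos; lra).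
    assert (r * (r*(g*u+v)) <= r * (1/2)) by (apply Rmult_le_compat_l; lra).
    lra.
  - replace (g*(r*u) + (r*u + r*v)) with (r*(g*u+v) + r*u) by ring.
    pose proof (Rabs_triang (r*(g*u+v)) (r*u)).
    rewrite Rabs_mult, (Rabs_right r), (Rabs_right (r*u)) in H by nra.
    pose proof (Rabs_pos (g*u+v)).
    assert ((1-r)*Rabs (r*(g*u+v) + r*u) <= (1-r)*(r*Rabs (g*u+v) + r*u))
      by (apply Rmult_le_compat_l; lra).
    assert (0 <= (1-r)*(1-r)*Rabs (g*u+v)) by (apply Rmult_le_pos; nra).
    assert (0 <= (1-r)*(1-r)*u) by (apply Rmult_le_pos; nra). nra.
Qed.

Lemma good_iter g r x : 1 <= g -> 0 <= r < 1 -> Good g r x ->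
  forall m, Good g r (iterM g r m x) /\ W g r (iterM g r m x) <= ((1+r)/2)^m * W g r x.
Proof.
  intros Hg Hr HG m. induction m.
  - simpl. split; [exact HG| lra].
  - destruct IHm as [H1 H2]. simpl iterM.
    destruct (good_step g r _ Hg Hr H1) as [H3 H4]. split; [exact H3|].
    simpl. assert (0 <= (1+r)/2) by lra.
    assert ((1+r)/2 * W g r (iterM g r m x) <= (1+r)/2 * (((1+r)/2)^m * W g r x))
      by (apply Rmult_le_compat_l; lra). lra.
Qed.

Lemma norm_W g r x : 1 <= g -> 0 <= r < 1 -> 0 <= fst x ->
  euclid_norm x <= (1/(1-r) + (1+g)/2) * W g r x.
Proof.
  intros Hg Hr Hu. destruct x as [u v]. simpl in Hu.
  pose proof (norm_le u v). unfold W, sF in *; simpl in *.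
  pose proof (Rabs_pos (g*u+v)).
  assert (Rabs v <= Rabs (g*u+v) + g*u).
  { replace v with ((g*u+v) - g*u) at 1 by ring.
    eapply Rle_trans; [apply Rabs_triang|]. rewrite Rabs_Ropp, (Rabs_right (g*u)) by nra. lra. }
  rewrite Rabs_right in H by lra.
  assert (Rabs (g*u+v) = 1/(1-r) * ((1-r) * Rabs (g*u+v))) by (field; lra).
  assert (0 < 1/(1-r)) by (apply Rdiv_lt_0_compat; lra).
  assert (1/(1-r) * ((1-r) * Rabs (g*u+v)) <= 1/(1-r) * ((1 - r) * Rabs (g * u + v) + 2 * u))
    by (apply Rmult_le_compat_l; lra).
  nra.
Qed.

Lemma branchA g r y : 1 <= g -> 0 <= r < 1 -> Good g r y ->
  Un_cv (fun m => euclid_norm (iterM g r m y)) 0.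
Proof.
  intros Hg Hr HG eps He.
  set (K := 1/(1-r) + (1+g)/2).
  assert (HK : 0 < K) by (unfold K; assert (0 < 1/(1-r)) by (apply Rdiv_lt_0_compat; lra); lra).
  assert (HW : 0 <= W g r y) by (unfold W; destruct HG as [_ [h _]]; pose proof (Rabs_pos (sF g y)); nra).
  destruct (pow_lt_1_zero ((1+r)/2) ltac:(rewrite Rabs_right; lra) (eps / (K * (W g r y + 1))))
    as [m0 Hm0].
  { apply Rdiv_lt_0_compat; [lra| nra]. }
  exists m0. intros m Hm. unfold R_dist. rewrite Rminus_0_r.
  rewrite Rabs_right by (apply Rle_ge, sqrt_pos).
  destruct (good_iter g r y Hg Hr HG m) as [HG' HWm].
  pose proof (norm_W g r _ Hg Hr (proj1 (proj2 HG'))). fold K in H.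
  specialize (Hm0 m Hm). rewrite Rabs_right in Hm0 by (apply Rle_ge, pow_le; lra).
  set (p := ((1 + r) / 2) ^ m) in *.
  assert (0 <= p) by (apply pow_le; lra).
  assert (p * (K * (W g r y + 1)) < eps).
  { apply (Rmult_lt_compat_r (K * (W g r y + 1))) in Hm0; [|nra].
    unfold Rdiv in Hm0. rewrite Rmult_assoc, Rinv_l in Hm0 by nra. lra. }
  assert (K * W g r (iterM g r m y) <= K * (p * W g r y)) by (apply Rmult_le_compat_l; lra).
  nra.
Qed.

Lemma Un_cv_shift f N : Un_cv (fun m => f (m + N)%nat) 0 -> Un_cv f 0.
Proof.
  intros H eps He. destruct (H eps He) as [M HM]. exists (M + N)%nat.
  intros n Hn. replace n with ((n - N) + N)%nat by lia. apply HM. lia.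
Qed.

Theorem theorem1 (gamma rho : R) (hgamma : 1 <= gamma)
  (hrho0 : 0 <= rho) (hrho1 : rho < 1) :
  Mmap gamma rho (0, 0) = (0, 0) /\
  forall x0 : R * R,
    Un_cv (fun n => euclid_norm (iterM gamma rho n x0)) 0.
Proof.
  assert (Hr : 0 <= rho < 1) by lra.
  split.
  { rewrite M_pos by lra. rewrite T_zero by lra. f_equal; ring. }
  intro x0.
  destruct (classic (exists N, inS gamma rho (iterM gamma rho N x0))) as [[N HN]|HN].
  2: { apply branchB; try assumption. intros n Hn. apply HN. now exists n. }
  apply (Un_cv_shift _ N).
  set (x := iterM gamma rho N x0) in *.
  assert (Hshift : forall m, iterM gamma rho (m + N) x0 = iterM gamma rho m x)
    by (intro m; unfold x; apply iter_add).
  destruct (pow_lt_1_zero rho ltac:(rewrite Rabs_right; lra) ((1-rho)/4) ltac:(lra)) as [k Hk].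
  destruct (res_decay gamma rho hgamma Hr k x HN) as [n1 [H1 [H2 H3]]].
  assert (Hres : 0 <= res x < 1).
  { unfold res. destruct HN as [[h _]|[h _]]; destruct (Rle_dec 0 (fst x)); lra. }
  specialize (Hk k (Nat.le_refl k)). rewrite Rabs_right in Hk by (apply Rle_ge, pow_le; lra).
  assert (rho ^ k * res x <= rho ^ k) by (pose proof (pow_le rho k hrho0); nra).
  destruct (nat_large (2 * sF gamma (iterM gamma rho n1 x))) as [M HM].
  destruct (kick gamma rho hgamma Hr M _ H1 H2 ltac:(lra) ltac:(lra)) as [k2 Hk2].
  rewrite <- iter_add in Hk2.
  pose proof (branchA gamma rho _ hgamma Hr Hk2) as HA.
  apply (Un_cv_shift _ (k2 + n1)).
  intros eps He. destruct (HA eps He) as [M' HM']. exists M'. intros m Hm.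
  rewrite Hshift, iter_add. apply HM'. exact Hm.
Qed.
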